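(* Let $\mathbf{B}$, $\mathbf{B}^*$, $\psi=\exists u_1\ldots\exists u_n\,\theta$, $\theta'$ and $\alpha$ be as in the context, and let $f\colon\{y_0,y_1,y_2,y_3\}\to B$ be a nontrivial assignment. Then $$\mathbf{B},f\models \exists x_0\ldots\exists x_3\,\exists w_0\ldots\exists w_3\,\exists u_1\ldots\exists u_n\,(\alpha\wedge\theta')$$ if and only if $\mathbf{B}^*\models\psi$.
   Context: The bowtie poset $\mathbf{B}$ has universe $B=\{0,1,2,3\}$ with order $0<1$, $0<3$, $2<1$, $2<3$ (plus reflexivity), and no other strict comparabilities. $\mathbf{B}^*$ is the structure over the vocabulary $\{\le,c_0,c_1,c_2,c_3\}$ ($c_i$ constant symbols) whose $\{\le\}$-reduct is $\mathbf{B}$ and with $c_i^{\mathbf{B}^*}=i$ for $i\in\{0,1,2,3\}$. $\psi=\exists u_1\ldots\exists u_n\,\theta$ is a sentence over $\{\le,c_0,\ldots,c_3\}$, where $\theta$ is a conjunction of atoms $t\le t'$ with $t,t'\in\{u_1,\dots,u_n,c_0,\dots,c_3\}$; $\theta'$ is obtained from $\theta$ by replacing each constant $c_i$ by the variable $w_i$. The variables $x_i,y_i,w_i$ ($i\in\{0,1,2,3\}$) are twelve fresh variables distinct from $u_1,\dots,u_n$. For sets of variables $S,S'$, $S\le S'$ abbreviates the conjunction of all atoms $s\le s'$ with $(s,s')\in S\times S'$. The formula $\alpha$ is $$\{w_0,w_2\}\le\{w_1,w_3\}\ \wedge\ \bigwedge_{j\in\{0,2\}}\{x_j\}\le\{y_j,w_j\}\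 \wedge\ \bigwedge_{j\in\{1,3\}}\{y_j,w_j\}\le\{x_j\}.$$ An assignment $f\colon\{y_0,y_1,y_2,y_3\}\to B$ is nontrivial if $\{f(y_0),f(y_2)\}=\{0,2\}$ and $\{f(y_1),f(y_3)\}=\{1,3\}$. *)

(* Defs.v *)
From mathcomp Require Import all_boot.
From Stdlib Require List.
Set Implicit Arguments. Unset Strict Implicit. Unset Printing Implicit Defensive.

(* Universe B = {0,1,2,3}, represented as 'I_4. *)
Definition i0 : 'I_4 := @Ordinal 4 0 isT.
Definition i1 : 'I_4 := @Ordinal 4 1 isT.
Definition i2 : 'I_4 := @Ordinal 4 2 isT.
Definition i3 : 'I_4 := @Ordinal 4 3 isT.

Definition ble (a b : 'I_4) : bool :=
  (a == b) || ((val a, val b) \in [:: (0, 1); (0, 3); (2, 1); (2, 3)]).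

(* Terms of psi: the variables u_1..u_n (indexed by 'I_n) or constants c_0..c_3. *)
Inductive term (n : nat) : Type :=
| TVar of 'I_n
| TConst of 'I_4.

(* theta is a conjunction of atoms t <= t', given as a list of pairs (t, t'). *)
Definition formula (n : nat) := seq (term n * term n).

Definition eval_star n (u : 'I_n -> 'I_4) (t : term n) : 'I_4 :=
  match t with TVar i => u i | TConst c => c end.

(* Interpretation of a term of theta' (c_i replaced by the variable w_i). *)
Definition eval_prime n (u : 'I_n -> 'I_4) (w : 'I_4 -> 'I_4) (t : term n) : 'I_4 :=
  match t with TVar i => u i | TConst c => w c end.

Definition sat_star n (theta : formula n) (u : 'I_n -> 'I_4) : Prop :=
  forall a, List.In a theta -> ble (eval_star u a.1) (eval_star u a.2).

Definition sat_prime n (theta : formula n) (u : 'I_n -> 'I_4) (w : 'I_4 -> 'I_4) : Prop :=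
  forall a, List.In a theta -> ble (eval_prime u w a.1) (eval_prime u w a.2).

Definition models_psi n (theta : formula n) : Prop :=
  exists u : 'I_n -> 'I_4, sat_star theta u.

Definition setle (S S' : seq 'I_4) : Prop :=
  forall s s', s \in S -> s' \in S' -> ble s s'.

Definition alpha (x y w : 'I_4 -> 'I_4) : Prop :=
  [/\ setle [:: w i0; w i2] [:: w i1; w i3],
      (forall j, j \in [:: i0; i2] -> setle [:: x j] [:: y j; w j]) &
      (forall j, j \in [:: i1; i3] -> setle [:: y j; w j] [:: x j])].

Definition nontrivial (f : 'I_4 -> 'I_4) : Prop :=
  [set f i0; f i2] = [set i0; i2] /\ [set f i1; f i3] = [set i1; i3].

(* Main.v *)
Require Import Defs.
From mathcomp Require Import all_boot.
From Stdlib Require List.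

Lemma bleE a b : ble a b = (a == b) || (~~ odd a && odd b).
Proof.
by case: a => [[|[|[|[|a]]]] Ha]; case: b => [[|[|[|[|b]]]] Hb].
Qed.

Lemma ble_refl a : ble a a.
Proof. by rewrite /ble eqxx. Qed.

Lemma ord4 (a : 'I_4) : [\/ a = i0, a = i1, a = i2 | a = i3].
Proof.
case: a => [[|[|[|[|a]]]] Ha] //.
- by constructor 1; apply: val_inj.
- by constructor 2; apply: val_inj.
- by constructor 3; apply: val_inj.
- by constructor 4; apply: val_inj.
Qed.

Lemma even4 (a : 'I_4) : ~~ odd a -> a = i0 \/ a = i2.
Proof. by case: (ord4 a) => ->; auto. Qed.

Lemma odd4 (a : 'I_4) : odd a -> a = i1 \/ a = i3.
Proof. by case: (ord4 a) => ->; auto. Qed.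

Lemma nt_props f : nontrivial f ->
  [/\ ~~ odd (f i0), ~~ odd (f i2), odd (f i1), odd (f i3) &
      (f i0 != f i2 /\ f i1 != f i3)].
Proof.
case=> H1 H2.
have h0 : f i0 \in [set i0; i2] by rewrite -H1 !inE eqxx.
have h2 : f i2 \in [set i0; i2] by rewrite -H1 !inE eqxx orbT.
have h1 : f i1 \in [set i1; i3] by rewrite -H2 !inE eqxx.
have h3 : f i3 \in [set i1; i3] by rewrite -H2 !inE eqxx orbT.
have k0 : i0 \in [set f i0; f i2] by rewrite H1 !inE eqxx.
have k2 : i2 \in [set f i0; f i2] by rewrite H1 !inE eqxx orbT.
have k1 : i1 \in [set f i1; f i3] by rewrite H2 !inE eqxx.
have k3 : i3 \in [set f i1; f i3] by rewrite H2 !inE eqxx orbT.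
rewrite !inE in h0 h1 h2 h3 k0 k1 k2 k3.
split.
- by case/orP: h0 => /eqP ->.
- by case/orP: h2 => /eqP ->.
- by case/orP: h1 => /eqP ->.
- by case/orP: h3 => /eqP ->.
split.
- apply/eqP => E; rewrite E orbb in k0 k2.
  by move: k0 k2 => /eqP <- /eqP.
- apply/eqP => E; rewrite E orbb in k1 k3.
  by move: k1 k3 => /eqP <- /eqP.
Qed.
Arguments nt_props {f}.

Lemma nt_good f : nontrivial f ->
  (forall a, odd (f a) = odd a) /\ (forall a, f (f a) = a).
Proof.
move=> /nt_props [e0 e2 o1 o3 [d02 d13]].
case: (even4 _ e0) => F0; rewrite F0 in d02 *;
case: (even4 _ e2) => F2; rewrite F2 in d02 * => //;
case: (odd4 _ o1) => F1; rewrite F1 in d13 *;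
case: (odd4 _ o3) => F3; rewrite F3 in d13 * => //;
split => a; case: (ord4 a) => ->;
rewrite ?F0 ?F1 ?F2 ?F3 ?F0 ?F1 ?F2 ?F3 //.
Qed.
Arguments nt_good {f}.

Lemma nt_inj f : nontrivial f -> injective f.
Proof. by move=> /nt_good [_ H]; apply: (can_inj H). Qed.
Arguments nt_inj {f}.

Lemma nt_ble f : nontrivial f -> forall a b, ble (f a) (f b) = ble a b.
Proof.
move=> Hf a b; have [Ho _] := nt_good Hf.
by rewrite !bleE !Ho (inj_eq (nt_inj Hf)).
Qed.
Arguments nt_ble {f}.

Lemma L1 (x y w : 'I_4) : ~~ odd y -> ble x y -> ble x w -> w = y \/ odd w.
Proof.
move=> ey; rewrite !bleE (negbTE ey) andbF orbF => /eqP ->.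
case/orP => [/eqP ->|/andP[_ ->]]; auto.
Qed.
Arguments L1 {x y w}.

Lemma L2 (x y w : 'I_4) : odd y -> ble y x -> ble w x -> w = y \/ ~~ odd w.
Proof.
move=> oy; rewrite !bleE oy andFb orbF => /eqP <-.
case/orP => [/eqP ->|/andP[-> _]]; auto.
Qed.
Arguments L2 {x y w}.

Lemma alpha_w x f w : nontrivial f -> alpha x f w -> forall c, w c = f c.
Proof.
move=> Hf [H1 H2 H3].
have [e0 e2 o1 o3 [d02 d13]] := nt_props Hf.
have A j : j \in [:: i0; i2] -> w j = f j \/ odd (w j).
  move=> hj; have := H2 j hj => S.
  have ej : ~~ odd (f j) by move: hj; rewrite !inE => /orP[]/eqP->.
  apply: (L1 (x := x j)) => //; apply: S; rewrite !inE eqxx ?orbT //.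
have B j : j \in [:: i1; i3] -> w j = f j \/ ~~ odd (w j).
  move=> hj; have := H3 j hj => S.
  have oj : odd (f j) by move: hj; rewrite !inE => /orP[]/eqP->.
  apply: (L2 (x := x j)) => //; apply: S; rewrite !inE eqxx ?orbT //.
have A0 := A i0 isT; have A2 := A i2 isT.
have B1 := B i1 isT; have B3 := B i3 isT.
have b01 : ble (w i0) (w i1) by apply: H1; rewrite !inE eqxx ?orbT.
have b03 : ble (w i0) (w i3) by apply: H1; rewrite !inE eqxx ?orbT.
have b21 : ble (w i2) (w i1) by apply: H1; rewrite !inE eqxx ?orbT.
have b23 : ble (w i2) (w i3) by apply: H1; rewrite !inE eqxx ?orbT.
rewrite !bleE in b01 b03 b21 b23.
have W0 : w i0 = f i0.
  case: A0 => // ow0.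
  move: b01 b03; rewrite ow0 /= !orbF => /eqP E1 /eqP E3.
  case: B1 => [F1|]; last by rewrite -E1 ow0.
  case: B3 => [F3|]; last by rewrite -E3 ow0.
  by move: d13; rewrite -F1 -F3 -E1 -E3 eqxx.
have W2 : w i2 = f i2.
  case: A2 => // ow2.
  move: b21 b23; rewrite ow2 /= !orbF => /eqP E1 /eqP E3.
  case: B1 => [F1|]; last by rewrite -E1 ow2.
  case: B3 => [F3|]; last by rewrite -E3 ow2.
  by move: d13; rewrite -F1 -F3 -E1 -E3 eqxx.
have W1 : w i1 = f i1.
  case: B1 => // ew1.
  move: b01 b21; rewrite (negbTE ew1) !andbF !orbF W0 W2 => /eqP E0 /eqP E2.
  by move: d02; rewrite E0 E2 eqxx.
have W3 : w i3 = f i3.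
  case: B3 => // ew3.
  move: b03 b23; rewrite (negbTE ew3) !andbF !orbF W0 W2 => /eqP E0 /eqP E2.
  by move: d02; rewrite E0 E2 eqxx.
by move=> c; case: (ord4 c) => ->.
Qed.
Arguments alpha_w {x f w}.

Theorem claim4 (n : nat) (theta : formula n) (f : 'I_4 -> 'I_4) :
  nontrivial f ->
  ((exists x w : 'I_4 -> 'I_4, exists u : 'I_n -> 'I_4,
      alpha x f w /\ sat_prime theta u w)
   <-> models_psi theta).
Proof.
move=> Hf; have [Ho Hi] := nt_good Hf.
have [e0 e2 o1 o3 [d02 d13]] := nt_props Hf.
split.
- case=> x [w [u [Ha Hs]]].
  have Hw := alpha_w Hf Ha.
  exists (fun i => f (u i)) => a Ia.
  have E t : eval_star (fun i => f (u i)) t = f (eval_prime u w t).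
    by case: t => [i|c] //=; rewrite Hw Hi.
  by rewrite !E nt_ble //; apply: Hs.
- case=> u Hs; exists f, f, (fun i => f (u i)); split.
  + split.
    * move=> s s'; rewrite !inE => /orP[]/eqP-> /orP[]/eqP->;
      by rewrite bleE ?e0 ?e2 ?o1 ?o3 orbT.
    * move=> j _ s s'; rewrite !inE => /eqP -> /orP[]/eqP->; exact: ble_refl.
    * move=> j _ s s'; rewrite !inE => /orP[]/eqP-> /eqP->; exact: ble_refl.
  + move=> a Ia.
    have E t : eval_prime (fun i => f (u i)) f t = f (eval_star u t).
      by case: t.
    by rewrite !E nt_ble //; apply: Hs.
Qed.
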